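(* For every $j\in\tfrac12\mathbb{N}^+$ and $1\le a,b\le 2j+1$, the $(a,b)$-entry of $K^{(j)}(t)$ equals \[ K^{(j)}_{(a,b)}(t)=\psi(a,b,j)\,t^{b-a-2j}\,y^{b-2j-1}\widetilde\Delta^{(-2j)}(-t^2)x^{1-a}, \qquad \psi(a,b,j)=q^{\rho(a,b,j)}\big([2j]_q^!\big)^{-1}\Big(\frac{[b-1]_q^![2j+1-a]_q^!}{[a-1]_q^![2j+1-b]_q^!}\Big)^{1/2}. \]
   Context: $\mathbb{F}$ is a field of characteristic zero in which every element has a square root; $q\in\mathbb{F}$ is nonzero and not a root of unity, with a fixed square root $q^{1/2}$ ($q^{k/2}:=(q^{1/2})^k$). Square roots $(\cdot)^{1/2}$ of ratios below are fixed choices in $\mathbb{F}$, chosen so that $\big(\frac{B}{A}\big)^{1/2}=\frac{B}{A}\big(\frac{A}{B}\big)^{1/2}$. $[n]_q=\frac{q^n-q^{-n}}{q-q^{-1}}$, $[n]_q^!=[n]_q\cdots[1]_q$, $[0]_q^!=1$. $\tfrac12\mathbb{N}^+=\{\tfrac12,1,\tfrac32,\dots\}$. $\mathbb{V}$ is the free algebra on letters $x,y$ with basis the words ($\mathbf 1$ empty word); $t$ an indeterminate. $\bar x=1,\bar y=-1$; a word $a_1\cdots a_n$ is Catalan if $\bar a_1+\dots+\bar a_i\ge0$ ($i<n$) and $\bar a_1+\dots+\bar a_n=0$; $\mathrm{Cat}_n$ = Catalan words of length $2n$. $\Delta^{(m)}_n=\sum_{a_1\cdots a_{2n}\in\mathrm{Cat}_n}\prod_{i=1}^{2n}[\bar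 a_1+\dots+\bar a_{i-1}+m(\bar a_i+1)/2]_q\,a_1\cdots a_{2n}$, $\Delta^{(m)}(t)=\sum_n\Delta^{(m)}_nt^n$; $\widetilde\Delta^{(m)}_n$ is obtained from $\Delta^{(m)}_n$ by interchanging $x$ and $y$ in every word, $\widetilde\Delta^{(m)}(t)=\sum_n\widetilde\Delta^{(m)}_nt^n$; $\Delta^{(m)}(-t^2)=\sum_n(-1)^n\Delta^{(m)}_nt^{2n}$, etc. Deletion: $x^{-1}w$ deletes a leading $x$ of a word $w$ (result $0$ if $w$ does not start with $x$, including $w=\mathbf 1$); $y^{-1}w$, $wx^{-1}$, $wy^{-1}$ analogously (leading $y$, trailing $x$, trailing $y$); extended linearly and coefficientwise; negative exponent $-k$ means $k$-fold application, exponent $0$ the identity. $\rho(a,b,j)=(a^2+b^2+6j^2+4ab-6aj-6bj-6a-6b+13j+6)/2$. $K^{(j)}(t)$ is the $(2j+1)\times(2j+1)$ matrix with $K^{(j)}_{(a,b)}(t)=\varphi(a,b,j)t^{a-b-2j}x^{1-b}\Delta^{(-2j)}(-t^2)y^{a-2j-1}$, where $\varphi(a,b,j)=q^{\rho(a,b,j)}([2j]_q^!)^{-1}\big(\frac{[a-1]_q^![2j+1-b]_q^!}{[b-1]_q^![2j+1-a]_q^!}\big)^{1/2}$. *)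

(* Defs.v *)
From HB Require Import structures.
From mathcomp Require Import all_boot all_order all_algebra.
Set Implicit Arguments. Unset Strict Implicit. Unset Printing Implicit Defensive.
Import Order.TTheory GRing.Theory Num.Theory.
Local Open Scope ring_scope.

Section Defs.
Variable F : fieldType.

Definition word := seq bool.
Definition lx : bool := true.
Definition ly : bool := false.

Definition bar (c : bool) : int := if c then 1 else -1.

Definition psum (w : word) (i : nat) : int :=
  \sum_(k < i) bar (nth ly w k).

Definition catalan (w : word) : bool :=
  all (fun i => 0 <= psum w i) (iota 1 (size w).-1) && (psum w (size w) == 0).

Definition qint (q : F) (k : int) : F := (q ^ k - q ^ (- k)) / (q - q^-1).
Definition qfact (q : F) (k : nat) : F := \prod_(1 <= i < k.+1) qint q i%:Z.

(* Elements of V[[t^{+-1}]]: coefficient of t^k times word w. *)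
Definition ser := int -> word -> F.

Definition Deltan (q : F) (m : int) (n : nat) (w : word) : F :=
  if (size w == 2 * n)%N && catalan w then
    \prod_(i < size w) qint q (psum w i + divz (m * (bar (nth ly w i) + 1)) 2)
  else 0.

Definition DeltaS (q : F) (m : int) : ser :=
  fun k w => if 0 <= k then Deltan q m `|k|%N w else 0.

(* f(-t^2) for a power series f(t) *)
Definition negsq (f : ser) : ser :=
  fun k w => if (0 <= k) && ~~ odd `|k|%N
             then (-1) ^+ (`|k| %/ 2)%N * f (`|k| %/ 2)%N%:Z w else 0.

Definition swapxy (f : ser) : ser := fun k w => f k (map negb w).

Definition tpow (e : int) (f : ser) : ser := fun k w => f (k - e) w.

Definition sscale (s : F) (f : ser) : ser := fun k w => s * f k w.

Definition lmul (c : bool) (k : nat) (f : ser) : ser :=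
  fun i w => if take k w == nseq k c then f i (drop k w) else 0.
Definition rmul (c : bool) (k : nat) (f : ser) : ser :=
  fun i w => if drop (size w - k) w == nseq k c then f i (take (size w - k) w)
             else 0.
Definition ldel (c : bool) (k : nat) (f : ser) : ser :=
  fun i w => f i (nseq k c ++ w).
Definition rdel (c : bool) (k : nat) (f : ser) : ser :=
  fun i w => f i (w ++ nseq k c).

(* c^e f  and  f c^e  for integer exponents e (negative = deletion) *)
Definition lpow (c : bool) (e : int) (f : ser) : ser :=
  if e <= 0 then ldel c `|e|%N f else lmul c `|e|%N f.
Definition rpow (c : bool) (e : int) (f : ser) : ser :=
  if e <= 0 then rdel c `|e|%N f else rmul c `|e|%N f.

Definition rhoK (a b : nat) (n : nat) : rat :=
  let a := a%:R in let b := b%:R in let j := n%:R / 2 in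
  (a ^+ 2 + b ^+ 2 + 6 * j ^+ 2 + 4 * a * b - 6 * a * j - 6 * b * j
   - 6 * a - 6 * b + 13 * j + 6) / 2.

(* q^r for r in (1/2)Z, with q^{k/2} := (q^{1/2})^k *)
Definition qhpow (qh : F) (r : rat) : F := qh ^ (numq (2 * r)).

Definition qratio (q : F) (n a b : nat) : F :=
  (qfact q (a - 1) * qfact q (n + 1 - b)) / (qfact q (b - 1) * qfact q (n + 1 - a)).

Definition phiK (q qh : F) (sq : F -> F) (n a b : nat) : F :=
  qhpow qh (rhoK a b n) * (qfact q n)^-1 * sq (qratio q n a b).

Definition psiK (q qh : F) (sq : F -> F) (n a b : nat) : F :=
  qhpow qh (rhoK a b n) * (qfact q n)^-1 * sq (qratio q n b a).

(* the (a,b)-entry of K^{(j)}(t), n = 2j *)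
Definition Kentry (q qh : F) (sq : F -> F) (n a b : nat) : ser :=
  sscale (phiK q qh sq n a b)
    (tpow (a%:Z - b%:Z - n%:Z)
       (lpow lx (1 - b%:Z)
          (rpow ly (a%:Z - n%:Z - 1) (negsq (DeltaS q (- n%:Z)))))).

Definition Kmat (q qh : F) (sq : F -> F) (n : nat) : 'M[ser]_(n.+1) :=
  \matrix_(i < n.+1, k < n.+1) Kentry q qh sq n i.+1 k.+1.

End Defs.

(* Main.v *)
Require Import Defs.
From HB Require Import structures.
From mathcomp Require Import all_boot all_order all_algebra.
From mathcomp Require Import zify ring.
From Stdlib Require Import FunctionalExtensionality.
Import Order.TTheory GRing.Theory Num.Theory.
Local Open Scope ring_scope.

Fixpoint ssum (u : word) : int :=
  match u with [::] => 0 | c :: u' => bar c + ssum u' end.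
Fixpoint okp (h : int) (u : word) : bool :=
  match u with [::] => true | c :: u' => (0 <= h + bar c) && okp (h + bar c) u' end.
Definition dz (n : nat) (c : bool) : int := divz (- n%:Z * (bar c + 1)) 2.
Fixpoint wt (F : fieldType) (q : F) (n : nat) (h : int) (u : word) : F :=
  match u with [::] => 1 | c :: u' => qint q (h + dz n c) * wt F q n (h + bar c) u' end.
Definition G (F : fieldType) (q : F) n h u : F := if okp h u then wt F q n h u else 0.

Lemma psum0 u : psum u 0 = 0.
Proof. by rewrite /psum big_ord0. Qed.
Lemma psumS c u i : psum (c :: u) i.+1 = bar c + psum u i.
Proof. by rewrite /psum big_ord_recl. Qed.
Lemma psum_size u : psum u (size u) = ssum u.
Proof. by elim: u => [|c u IH]; rewrite ?psum0 //= psumS IH. Qed.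

Lemma okp_all h u : okp h u = all (fun i => 0 <= h + psum u i) (iota 1 (size u)).
Proof.
elim: u h => [|c u IH] h //=.
rewrite psumS psum0 addr0 IH (iotaDl 1 1) all_map.
congr (_ && _); apply: eq_all => i /=; by rewrite psumS addrA.
Qed.

Lemma catalanE u : catalan u = okp 0 u && (ssum u == 0).
Proof.
rewrite /catalan okp_all psum_size.
case: u => [|c u]; first by [].
set s := size _.
have -> : s = (size u + 1)%N by rewrite addn1.
rewrite iotaD all_cat /= andbT add0r add1n.
have -> : (size u).+1 = size (c :: u) by [].
rewrite psum_size.
rewrite addn1 /=.
case: eqP => [->|_]; rewrite ?andbF // (_ : (0 <= 0 :> int) = true) // !andbT.
by apply: eq_all => i /=; rewrite add0r.
Qed.

Lemma prod_wt (F : fieldType) (q : F) n h u :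
  \prod_(i < size u) qint q (h + psum u i + dz n (nth ly u i)) = wt F q n h u.
Proof.
elim: u h => [|c u IH] h /=; first by rewrite big_ord0.
rewrite big_ord_recl /= psum0 addr0 -IH; congr (_ * _).
by apply: eq_bigr => i _; rewrite psumS addrA.
Qed.

Lemma prod_wt0 (F : fieldType) (q : F) n u :
  \prod_(i < size u) qint q (psum u i + divz (- n%:Z * (bar (nth ly u i) + 1)) 2)
  = wt F q n 0 u.
Proof. rewrite -prod_wt; apply: eq_bigr => i _; by rewrite add0r. Qed.

Lemma negsqE (F : fieldType) (q : F) (n : nat) K u :
  negsq (DeltaS q (- n%:Z)) K u =
  if (K == (size u)%:Z) && ~~ odd (size u)
  then (-1) ^+ (size u %/ 2) * (if ssum u == 0 then G F q n 0 u else 0) else 0.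
Proof.
rewrite /negsq /DeltaS /Deltan catalanE prod_wt0 /G.
case: K => [k|k] //=.
have [ok|ek] := boolP (odd k); first by case: (eqVneq k (size u)) => [<-|ne]; rewrite ?ok /= ?andbF // eqz_nat (negbTE ne).
have k2 : (2 * (k %/ 2))%N = k.
  by rewrite mulnC muln2 divn2 -[RHS]odd_double_half (negbTE ek).
rewrite k2; case: (eqVneq k (size u)) => [<-|ne]; rewrite ?ek /=.
  by rewrite eqxx /=; case: (okp 0 u); case: (ssum u == 0).
by rewrite mulr0 eqz_nat (negbTE ne).
Qed.

Lemma ssum_cat u v : ssum (u ++ v) = ssum u + ssum v.
Proof. by elim: u => [|c u IH] /=; rewrite ?add0r // IH addrA. Qed.

Lemma okp_cat h u v : okp h (u ++ v) = okp h u && okp (h + ssum u) v.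
Proof.
elim: u h => [|c u IH] h /=; first by rewrite addr0.
by rewrite IH addrA andbA.
Qed.

Lemma wt_cat (F : fieldType) (q : F) n h u v :
  wt F q n h (u ++ v) = wt F q n h u * wt F q n (h + ssum u) v.
Proof.
elim: u h => [|c u IH] h /=; first by rewrite addr0 mul1r.
by rewrite IH addrA mulrA.
Qed.

Lemma G_cat (F : fieldType) (q : F) n h u v :
  G F q n h (u ++ v) = G F q n h u * G F q n (h + ssum u) v.
Proof.
rewrite /G okp_cat wt_cat.
by case: (okp h u); case: (okp _ v); rewrite ?mulr0 ?mul0r.
Qed.

Lemma G_nil (F : fieldType) (q : F) n h : G F q n h [::] = 1.
Proof. by []. Qed.

Lemma G_cons (F : fieldType) (q : F) n h c w :
  G F q n h (c :: w) =
  if 0 <= h + bar c then qint q (h + dz n c) * G F q n (h + bar c) w else 0.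
Proof.
rewrite /G /=; case: (0 <= h + bar c) => //=.
by case: (okp _ w); rewrite ?mulr0.
Qed.

Lemma G_consT (F : fieldType) (q : F) n h c w : 0 <= h + bar c ->
  G F q n h (c :: w) = qint q (h + dz n c) * G F q n (h + bar c) w.
Proof. by move=> H; rewrite G_cons H. Qed.

Lemma dzT n : dz n true = - n%:Z.
Proof. by rewrite /dz mulzK. Qed.
Lemma dzF n : dz n false = 0.
Proof. by rewrite /dz /= mulr0 div0z. Qed.

Lemma qint_opp (F : fieldType) (q : F) k : qint q (- k) = - qint q k.
Proof. by rewrite /qint opprK -mulNr opprB. Qed.
Lemma qint0 (F : fieldType) (q : F) : qint q 0 = 0.
Proof. by rewrite /qint oppr0 subrr mul0r. Qed.

Lemma qfactS (F : fieldType) (q : F) k : qfact q k.+1 = qfact q k * qint q k.+1%:Z.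
Proof. by rewrite /qfact big_nat_recr. Qed.

Lemma ssum_nseq c m : ssum (nseq m c) = (m%:Z) * bar c.
Proof.
elim: m => [|m IH] /=; first by rewrite mul0r.
by rewrite IH -addn1 PoszD mulrDl mul1r addrC.
Qed.

Lemma ssum_negb w : ssum (map negb w) = - ssum w.
Proof. by elim: w => [|c w IH] /=; [rewrite oppr0 | rewrite IH opprD; case: c]. Qed.

Lemma barT : bar true = 1. Proof. by []. Qed.
Lemma barF : bar false = -1. Proof. by []. Qed.

Lemma G_swap (F : fieldType) (q : F) n w : forall h : int, 0 <= h <= n%:Z ->
  G F q n h w = (-1) ^+ size w * G F q n (n%:Z - h) (map negb w).
Proof.
elim: w => [|c w IH] h /andP [h0 hn] /=; first by rewrite expr0 mul1r.
rewrite !G_cons exprS.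
case: c; rewrite [~~ _]/= ?barT ?barF ?dzT ?dzF !addr0.
- have [hn'|hn'] := eqVneq h n%:Z.
    by rewrite hn' subrr qint0 !mul0r; case: (0 <= _ + 1); case: (0 <= _ - 1); rewrite ?mulr0.
  rewrite ifT; last by lia.
  rewrite ifT; last by lia.
  rewrite (IH (h + 1)); last by apply/andP; split; lia.
  have -> : n%:Z - (h + 1) = n%:Z - h + -1 by ring.
  have -> : h + - n%:Z = - (n%:Z - h) by ring.
  rewrite qint_opp; ring.
- have [h0'|h0'] := eqVneq h 0.
    rewrite h0' qint0 subr0 subrr qint0 !mul0r.
    by case: (0 <= _ - 1); case: (0 <= _ + 1); rewrite ?mulr0.
  rewrite ifT; last by lia.
  rewrite ifT; last by lia.
  rewrite (IH (h + -1)); last by apply/andP; split; lia.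
  have -> : n%:Z - (h + -1) = n%:Z - h + 1 by ring.
  have -> : n%:Z - h + - n%:Z = - h by ring.
  rewrite qint_opp.
  ring.
Qed.

Lemma G_up (F : fieldType) (q : F) n m : forall h : nat, (h + m <= n)%N ->
  G F q n h%:Z (nseq m true) * qfact q (n - h - m) = (-1) ^+ m * qfact q (n - h).
Proof.
elim: m => [|m IH] h hm; first by rewrite /= subn0 !mul1r.
rewrite [nseq _ _]/= G_consT barT ?dzT; last by simpl; lia.
have -> : h%:Z + 1 = h.+1%:Z by rewrite -addn1 PoszD.
rewrite -mulrA (_ : (n - h - m.+1 = n - h.+1 - m)%N); last by lia.
rewrite IH; last by lia.
have -> : (n - h = (n - h.+1).+1)%N by lia.
rewrite qfactS exprS.
have -> : h%:Z + - n%:Z = - ((n - h.+1).+1)%:Z by lia.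
rewrite qint_opp; ring.
Qed.

Lemma G_down (F : fieldType) (q : F) n h : G F q n h%:Z (nseq h false) = qfact q h.
Proof.
elim: h => [|h IH]; first by rewrite /qfact big_geq.
rewrite [nseq _ _]/= G_consT barF ?dzF ?addr0; last by simpl; lia.
have -> : h.+1%:Z + -1 = h%:Z by lia.
by rewrite IH qfactS mulrC.
Qed.

Lemma qint_neq0 (F : fieldType) (q : F) k : q != 0 ->
  (forall k : nat, (0 < k)%N -> q ^+ k != 1) -> (0 < k)%N -> qint q k%:Z != 0.
Proof.
move=> q0 qn k0.
have sub0 : forall j : nat, (0 < j)%N -> q ^+ j - (q ^+ j)^-1 != 0.
  move=> j j0; rewrite subr_eq0; apply/negP => /eqP E.
  have xj : q ^+ j != 0 by rewrite expf_neq0.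
  have : q ^+ (j + j) == 1 by rewrite exprD {2}E mulfV.
  by apply/negP; apply: qn; rewrite addn_gt0 j0.
rewrite /qint -exprnN; apply: mulf_neq0; first exact: sub0.
by rewrite invr_neq0 //; have := sub0 1%N isT; rewrite expr1.
Qed.

Lemma qfact_neq0 (F : fieldType) (q : F) m : q != 0 ->
  (forall k : nat, (0 < k)%N -> q ^+ k != 1) -> qfact q m != 0.
Proof.
move=> q0 qn; elim: m => [|m IH]; first by rewrite /qfact big_geq ?oner_neq0.
by rewrite qfactS mulf_neq0 // qint_neq0.
Qed.

Lemma odd_eq x y z : (x + y = 2 * z)%N -> odd x = odd y.
Proof.
move=> H; have := congr1 odd H; rewrite oddD oddM /=.
by case: (odd x); case: (odd y).
Qed.

Lemma sgn_eq (F : fieldType) x y z t : (x + 2 * y = z + 2 * t)%N ->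
  (-1) ^+ x = (-1) ^+ z :> F.
Proof.
have sq1 : forall m, (-1) ^+ (2 * m)%N = 1 :> F.
  by move=> m; rewrite exprM expr2 mulN1r opprK expr1n.
move=> H; have : (-1) ^+ (x + 2 * y)%N = (-1) ^+ (z + 2 * t)%N :> F by rewrite H.
by rewrite exprD sq1 mulr1 exprD sq1 mulr1.
Qed.

Lemma par_aux (A B n w p1 p2 : nat) : (A <= n)%N -> (B <= n)%N ->
  (p1 * 2 = B + w + (n - A))%N -> (p2 * 2 = n - B + w + A)%N ->
  (p1 + B + w + 2 * p2 = p2 + (n - B) + 2 * (B + w))%N.
Proof. lia. Qed.

Lemma negsqE' (F : fieldType) (q : F) (n : nat) K u :
  negsq (DeltaS q (- n%:Z)) K u =
  ((K == (size u)%:Z) && ~~ odd (size u))%:R *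
  ((-1) ^+ (size u %/ 2) * ((ssum u == 0)%:R * G F q n 0 u)).
Proof.
rewrite negsqE; case: ((K == (size u)%:Z) && ~~ odd (size u));
  case: (ssum u == 0); by rewrite /= ?mul1r ?mul0r ?mulr0.
Qed.

Lemma negsq_swap (F : fieldType) (f : ser F) K u : negsq (swapxy f) K u = negsq f K (map negb u).
Proof. by []. Qed.

Lemma lpow_le0 (F : fieldType) c e (f : ser F) : e <= 0 -> lpow c e f = ldel c `|e|%N f.
Proof. by move=> H; rewrite /lpow H. Qed.
Lemma rpow_le0 (F : fieldType) c e (f : ser F) : e <= 0 -> rpow c e f = rdel c `|e|%N f.
Proof. by move=> H; rewrite /rpow H. Qed.
Lemma absNn (e : int) (m : nat) : e = - m%:Z -> `|e|%N = m.
Proof. by move->; rewrite abszN absz_nat. Qed.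


Theorem proposition6p6 (F : fieldType)
  (charF0 : [pchar F] =i pred0)
  (sqrtF : forall x : F, exists y : F, y ^+ 2 = x)
  (q qh : F) (q_neq0 : q != 0)
  (q_nroot : forall k : nat, (0 < k)%N -> q ^+ k != 1)
  (qhE : qh ^+ 2 = q)
  (n : nat) (n_gt0 : (0 < n)%N)
  (sq : F -> F) (sqE : forall x : F, sq x ^+ 2 = x)
  (sq_conv : forall a b : nat, (1 <= a <= n.+1)%N -> (1 <= b <= n.+1)%N ->
     sq (qratio q n b a) = qratio q n b a * sq (qratio q n a b))
  (a b : nat) (ha : (1 <= a <= n.+1)%N) (hb : (1 <= b <= n.+1)%N) :
  Kmat q qh sq n (inord a.-1) (inord b.-1) =
  sscale (psiK q qh sq n a b)
    (tpow (b%:Z - a%:Z - n%:Z)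
       (lpow ly (b%:Z - n%:Z - 1)
          (rpow lx (1 - a%:Z) (negsq (swapxy (DeltaS q (- n%:Z))))))).
Proof.
have psiE := sq_conv a b ha hb.
move: ha hb psiE; case: a => [|A] //; case: b => [|B] // ha hb psiE.
have An : (A <= n)%N by lia.
have Bn : (B <= n)%N by lia.
rewrite /Kmat mxE !inordK; try lia.
rewrite /Kentry (@lpow_le0 _ _ (1 - B.+1%:Z)); last by lia.
rewrite (@rpow_le0 _ _ (A.+1%:Z - n%:Z - 1)); last by lia.
rewrite (@lpow_le0 _ _ (B.+1%:Z - n%:Z - 1)); last by lia.
rewrite (@rpow_le0 _ _ (1 - A.+1%:Z)); last by lia.
rewrite (@absNn (1 - B.+1%:Z) B); last by lia.
rewrite (@absNn (1 - A.+1%:Z) A); last by lia.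
rewrite (@absNn (A.+1%:Z - n%:Z - 1) (n - A)%N); last by lia.
rewrite (@absNn (B.+1%:Z - n%:Z - 1) (n - B)%N); last by lia.
apply: functional_extensionality => k; apply: functional_extensionality => w.
rewrite /sscale /tpow /ldel /rdel negsq_swap !negsqE'.
rewrite /lx /ly !map_cat !map_nseq -!catA [~~ false]/= [~~ true]/=.
set u1 := nseq B true ++ w ++ nseq (n - A) false.
set u2 := nseq (n - B) true ++ map negb w ++ nseq A false.
have s1 : size u1 = (B + size w + (n - A))%N by rewrite /u1 !size_cat !size_nseq addnA.
have s2 : size u2 = (n - B + size w + A)%N by rewrite /u2 !size_cat !size_nseq size_map addnA.
have su1 : ssum u1 = B%:Z + ssum w - (n - A)%N%:Z.
  by rewrite /u1 !ssum_cat !ssum_nseq barT barF; ring.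
have su2 : ssum u2 = (n - B)%N%:Z - ssum w - A%:Z.
  by rewrite /u2 !ssum_cat !ssum_nseq ssum_negb barT barF; ring.
have oddE : odd (size u2) = odd (size u1).
  apply: (@odd_eq _ _ (size w + n)); rewrite s1 s2; lia.
have c21 : ((k - (B.+1%:Z - A.+1%:Z - n%:Z) == (size u2)%:Z) && ~~ odd (size u2)) =
           ((k - (A.+1%:Z - B.+1%:Z - n%:Z) == (size u1)%:Z) && ~~ odd (size u1)).
  rewrite oddE; congr (_ && _); rewrite s1 s2; apply/eqP/eqP => H; lia.
have e21 : (ssum u2 == 0) = (ssum u1 == 0).
  rewrite su1 su2; apply/eqP/eqP => H; lia.
rewrite c21 e21.
case E: (_ && _); last by rewrite !mul0r !mulr0.
case E2: (ssum u1 == 0); last by rewrite !mul0r !mulr0.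
move/andP: E => [_ ev1]; move/eqP: E2; rewrite su1 => E2.
rewrite !mul1r.
have G1 : G F q n 0 u1 = G F q n 0 (nseq B true) * (G F q n B%:Z w * qfact q (n - A)).
  rewrite /u1 G_cat ssum_nseq barT mulr1 add0r G_cat.
  by rewrite (_ : B%:Z + ssum w = (n - A)%N%:Z) ?G_down //; exact: subr0_eq E2.
have G2 : G F q n 0 u2 =
   G F q n 0 (nseq (n - B) true) * (G F q n (n - B)%N%:Z (map negb w) * qfact q A).
  rewrite /u2 G_cat ssum_nseq barT mulr1 add0r G_cat ssum_negb.
  rewrite (_ : (n - B)%N%:Z - ssum w = A%:Z) ?G_down //.
  apply: subr0_eq; rewrite -(subzn An) in E2; rewrite -(subzn Bn).
  have -> : n%:Z - B%:Z - ssum w - A%:Z = - (B%:Z + ssum w - (n%:Z - A%:Z)) by ring.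
  by rewrite E2 oppr0.
have Gs : G F q n B%:Z w = (-1) ^+ size w * G F q n (n - B)%N%:Z (map negb w).
  rewrite G_swap; last by rewrite le0z_nat lez_nat.
  by rewrite subzn.
have nz : forall m, qfact q m != 0 := fun m => @qfact_neq0 F q m q_neq0 q_nroot.
have HX : G F q n 0 (nseq B true) = (-1) ^+ B * qfact q n / qfact q (n - B).
  have := @G_up F q n B 0%N; rewrite add0n !subn0 => /(_ Bn) <-.
  by rewrite mulfK.
have HY : G F q n 0 (nseq (n - B) true) = (-1) ^+ (n - B) * qfact q n / qfact q B.
  have := @G_up F q n (n - B) 0%N; rewrite add0n !subn0 subKn // => /(_ (leq_subr _ _)) <-.
  by rewrite mulfK.
rewrite G1 G2 Gs HX HY /psiK psiE /phiK /qratio.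
rewrite !subn1 /= !addn1 !subSS.
have ev2 : ~~ odd (size u2) by rewrite oddE.
have d1 : (size u1 %/ 2 * 2 = size u1)%N by rewrite divnK // dvdn2.
have d2 : (size u2 %/ 2 * 2 = size u2)%N by rewrite divnK // dvdn2.
have sgn : (-1) ^+ (size u1 %/ 2) * (-1) ^+ B * (-1) ^+ size w =
           (-1) ^+ (size u2 %/ 2) * (-1) ^+ (n - B) :> F.
  rewrite -!exprD; apply: (@sgn_eq F _ (size u2 %/ 2) _ (B + size w)).
  apply: (@par_aux A B n (size w) _ _ An Bn); [by rewrite d1 s1 | by rewrite d2 s2].
set Q := qhpow qh _.
set S := sq _.
set Z := G F q n _ _.
transitivity (Q / qfact q n * S * Z * qfact q n * qfact q (n - A) / qfact q (n - B) *
  ((-1) ^+ (size u1 %/ 2) * (-1) ^+ B * (-1) ^+ size w)).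
  by field; rewrite ?nz.
by rewrite sgn; field; rewrite !nz.
Qed.
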